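(* Let $(\mathbf A,\tau)$ be a state-morphism algebra and let $\theta_\tau=\{(x,y)\in A\times A:\tau(x)=\tau(y)\}$. If $\theta$ is a congruence of $\mathbf A$ with $\theta\subseteq\theta_\tau$, then $\theta$ is a congruence of $(\mathbf A,\tau)$. Moreover, if $x,y\in A$ satisfy $(x,y)\in\theta_\tau$, then $\Theta(x,y)=\Theta_\tau(x,y)$.
   Context: Let $F$ be an arbitrary algebraic type. A state-morphism on an algebra $\mathbf A$ of type $F$ is an endomorphism $\tau:\mathbf A\to\mathbf A$ with $\tau\circ\tau=\tau$; $(\mathbf A,\tau)$, viewed as an algebra of type $F$ extended by the unary operation $\tau$, is a state-morphism algebra. Its congruences are the congruences of $\mathbf A$ compatible with $\tau$. $\Theta(x,y)$ denotes the congruence of $\mathbf A$ generated by the pair $(x,y)$, and $\Theta_\tau(x,y)$ the congruence of $(\mathbf A,\tau)$ generated by $(x,y)$. *)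

(* Defs.v *)
Set Implicit Arguments.

(* A type F: a type of operation symbols [ops] with arities [ar].
   An algebra A of type F: a carrier [A] with, for each symbol f,
   an operation [op f : (Fin-indexed arguments) -> A]. *)
Definition args (A : Type) (n : nat) := {i : nat | i < n} -> A.

Definition interp (ops : Type) (ar : ops -> nat) (A : Type) :=
  forall f : ops, args A (ar f) -> A.

Definition is_endomorphism (ops : Type) (ar : ops -> nat) (A : Type)
  (op : interp ar A) (tau : A -> A) : Prop :=
  forall (f : ops) (a : args A (ar f)), tau (op f a) = op f (fun i => tau (a i)).

Definition is_state_morphism (ops : Type) (ar : ops -> nat) (A : Type)
  (op : interp ar A) (tau : A -> A) : Prop :=
  is_endomorphism op tau /\ (forall x, tau (tau x) = tau x).

Definition is_equivalence (A : Type) (R : A -> A -> Prop) : Prop :=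
  (forall x, R x x) /\ (forall x y, R x y -> R y x) /\
  (forall x y z, R x y -> R y z -> R x z).

Definition is_congruence (ops : Type) (ar : ops -> nat) (A : Type)
  (op : interp ar A) (R : A -> A -> Prop) : Prop :=
  is_equivalence R /\
  (forall (f : ops) (a b : args A (ar f)),
      (forall i, R (a i) (b i)) -> R (op f a) (op f b)).

Definition is_congruence_tau (ops : Type) (ar : ops -> nat) (A : Type)
  (op : interp ar A) (tau : A -> A) (R : A -> A -> Prop) : Prop :=
  is_congruence op R /\ (forall x y, R x y -> R (tau x) (tau y)).

Definition Cg (ops : Type) (ar : ops -> nat) (A : Type)
  (op : interp ar A) (x y : A) : A -> A -> Prop :=
  fun u v => forall R, is_congruence op R -> R x y -> R u v.

Definition Cg_tau (ops : Type) (ar : ops -> nat) (A : Type)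
  (op : interp ar A) (tau : A -> A) (x y : A) : A -> A -> Prop :=
  fun u v => forall R, is_congruence_tau op tau R -> R x y -> R u v.

Definition theta_tau (A : Type) (tau : A -> A) : A -> A -> Prop :=
  fun x y => tau x = tau y.

(* Main.v *)
Require Import Defs.
From Stdlib Require Import FunctionalExtensionality.

Lemma Cg_cong (ops : Type) (ar : ops -> nat) (A : Type) (op : interp ar A) x y :
  is_congruence op (Cg op x y).
Proof.
  split; [split; [|split]|].
  - intros a R [[r _] _] _; apply r.
  - intros a b H R HR Hxy. pose proof HR as [[_ [s _]] _]. apply s, H; auto.
  - intros a b c H1 H2 R HR Hxy. pose proof HR as [[_ [_ t]] _].
    apply t with b; [apply H1|apply H2]; assumption.
  - intros f a b H R HR Hxy. pose proof HR as [_ c]. apply c. intro i. apply H; auto.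
Qed.

Theorem lemma3p3 (ops : Type) (ar : ops -> nat) (A : Type)
  (op : interp ar A) (tau : A -> A) :
  is_state_morphism op tau ->
  (forall theta : A -> A -> Prop,
      is_congruence op theta ->
      (forall x y, theta x y -> theta_tau tau x y) ->
      is_congruence_tau op tau theta) /\
  (forall x y : A, theta_tau tau x y ->
      forall u v, Cg op x y u v <-> Cg_tau op tau x y u v).
Proof.
  intros [Hend Hid].
  assert (P1 : forall theta : A -> A -> Prop,
      is_congruence op theta ->
      (forall x y, theta x y -> theta_tau tau x y) ->
      is_congruence_tau op tau theta).
  { intros theta Hc Hs. split; auto. intros x y Hxy.
    unfold theta_tau in Hs. rewrite (Hs _ _ Hxy). destruct Hc as [[r _] _]. apply r. }
  split; auto.
  intros x y Hxy u v; split.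
  - intros H R [HR _] Rxy. apply H; auto.
  - intros H. apply H.
    + apply P1. apply Cg_cong.
      intros a b Hab. apply Hab; auto.
      split; [split; [|split]|]; unfold theta_tau.
      * reflexivity.
      * intros; symmetry; auto.
      * intros; etransitivity; eauto.
      * intros f c d Hcd. rewrite !Hend. f_equal.
        apply functional_extensionality; auto.
    + intros R HR Rxy. exact Rxy.
Qed.
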